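(* For every integer $k\ge0$ and every real $x\in[0,1]$, $$\log_2(1+kx)\ge\log_2(1+k)\cdot\log_2(1+x).$$ *)

(* Defs.v *)
From Stdlib Require Import Reals.
Open Scope R_scope.

Definition log2 (y : R) : R := ln y / ln 2.

(* Main.v *)
Require Import Defs.
From Stdlib Require Import Reals Lra.
From Coquelicot Require Import Coquelicot.
Open Scope R_scope.

Lemma phi_der (k a c : R) : 0 <= k -> 0 <= c ->
  derivable_pt_lim (fun y => ln (1 + k * y) - a * ln (1 + y)) c
    (k / (1 + k * c) - a / (1 + c)).
Proof.
  intros hk hc. apply is_derive_Reals.
  auto_derive.
  - split; [nra|split; [lra|exact I]].
  - field; nra.
Qed.

Theorem mainTheorem11 (k : nat) (x : R) (hx0 : 0 <= x) (hx1 : x <= 1) :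
  log2 (1 + INR k * x) >= log2 (1 + INR k) * log2 (1 + x).
Proof.
  unfold log2.
  set (K := INR k).
  assert (hK : 0 <= K) by apply pos_INR.
  assert (hl2 : 0 < ln 2) by (rewrite <- ln_1; apply ln_increasing; lra).
  set (a := ln (1 + K) / ln 2).
  assert (hka : K * (1 - a) <= 0).
  { destruct (Req_dec K 0) as [h0|h0]. rewrite h0; lra.
    assert (K >= 1).
    { unfold K in *. destruct k. simpl in h0; lra. rewrite S_INR.
      pose proof (pos_INR k); lra. }
    assert (a >= 1).
    { unfold a. apply Rle_ge. apply (Rmult_le_reg_r (ln 2)); auto.
      unfold Rdiv. rewrite Rmult_assoc, Rinv_l, Rmult_1_r by lra.
      rewrite Rmult_1_l. apply ln_le; lra. }
    nra. }
  set (phi := fun y => ln (1 + K * y) - a * ln (1 + y)).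
  assert (hphi : forall c, 0 <= c -> derivable_pt_lim phi c
       (K / (1 + K * c) - a / (1 + c))) by (intros; apply phi_der; auto).
  set (N := fun y => (K - a) + y * (K * (1 - a))).
  assert (hsign : forall c, 0 <= c ->
     K / (1 + K * c) - a / (1 + c) = N c / ((1 + K * c) * (1 + c))).
  { intros c hc. unfold N. field. nra. }
  assert (hphi0 : phi 0 = 0).
  { unfold phi. rewrite Rmult_0_r, !Rplus_0_r, ln_1. ring. }
  assert (hphi1 : phi 1 = 0).
  { unfold phi, a. rewrite Rmult_1_r. replace (1+1) with 2 by lra. field. lra. }
  assert (goal : phi x >= 0).
  { destruct (Rle_lt_dec 0 (N x)) as [hN|hN].
    - destruct (Req_dec x 0) as [e|e]. rewrite e; lra.
      destruct (MVT_cor2 phi (fun c => K / (1 + K * c) - a / (1 + c)) 0 x)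
        as [c [hc1 hc2]]; [lra| intros c hc; apply hphi; lra |].
      rewrite hsign in hc1 by lra.
      assert (N c >= 0) by (unfold N in *; nra).
      assert (0 < (1 + K * c) * (1 + c)) by nra.
      assert (N c / ((1 + K * c) * (1 + c)) >= 0).
      { unfold Rdiv. apply Rle_ge, Rmult_le_pos; [lra|]. left; apply Rinv_0_lt_compat; auto. }
      nra.
    - destruct (Req_dec x 1) as [e|e]. rewrite e; lra.
      destruct (MVT_cor2 phi (fun c => K / (1 + K * c) - a / (1 + c)) x 1)
        as [c [hc1 hc2]]; [lra| intros c hc; apply hphi; lra |].
      rewrite hsign in hc1 by lra.
      assert (N c < 0) by (unfold N in *; nra).
      assert (0 < (1 + K * c) * (1 + c)) by nra.
      assert (N c / ((1 + K * c) * (1 + c)) < 0).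
      { unfold Rdiv. apply Rmult_neg_pos; auto. apply Rinv_0_lt_compat; auto. }
      nra. }
  unfold phi in goal; cbv beta in goal. apply Rle_ge.
  apply (Rmult_le_reg_r (ln 2)); auto.
  replace (ln (1 + K) / ln 2 * (ln (1 + x) / ln 2) * ln 2) with (a * ln (1+x))
    by (unfold a; field; lra).
  replace (ln (1 + K * x) / ln 2 * ln 2) with (ln (1 + K * x)) by (field; lra).
  replace (a * (ln (1 + x) / ln 2) * ln 2) with (a * ln (1+x)) by (field; lra). lra.
Qed.
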